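(* Let $D$ be a document with phrase sequence $S_D=[s_1,\dots,s_n]$ and visual pattern function $p$. Let $GT=(V^*,E^* )$ be the true SHT of $D$; assume $GT$ is a candidate SHT whose root corresponds to $s_1$, and assume $GT$ is well-formatted. Assume further that the header-identification step is correct, i.e., the set of phrases retained after pruning clusters is exactly the set of phrases corresponding to the nodes of $GT$. Then the tree returned by \texttt{oracle\_gen}$(D)$ equals $GT$: it has the same node set and the same parent-child edges.
   Context: A document $D$ is represented by a sequence of phrases $S_D=[s_1,\dots,s_n]$ (maximal runs of consecutive words with identical font size, name, and type). Each phrase $s$ has a visual pattern $p(s)$, a vector of formatting features (font size, font name, font type, whether all-capitalized, whether it starts with a number, whether it starts with a letter, whether it is centered); two phrases have the same pattern iff these vectors are equal. A candidate SHT (semantic hierarchical tree) for $D$ is a single-rooted, ordered, connected directed tree $T=(V,E)$ in which each node $v$ corresponds to a distinct phrase $s_{ind(v)}\in S_D$ (its phrase index $ind(v)$), such that $ind(v)<ind(v')$ for every child $v'$ of $v$ and $ind(v)<ind(v')$ for every right sibling $v'$ of $v$ (so preorder traversal visits nodes in increasing phrase index). Write $p(v)=p(s_{ind(v)})$. For a node $v$ of a tree $T$, $next(v)$ is the phrase index of its immediate right sibling if it exists, otherwise that of the immediate right sibling of the closest ancestor having one; if no ancestor of $v$ has a right sibling, $next(v)=n$. The text span of $v$ is $ts(v)=[ind(v),\,next(v)-1]$ (a set of phrase indices). The granularity of $v$ is its depth (root has depth 1). Well-formatted: for a node $v$, the visual prefix $vispre(v)$ is the sequence of visual patterns of the nodes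 on the path from the root to $v$'s parent (e.g., a depth-3 node with ancestors of patterns $p_1,p_2$ has $vispre=p_1p_2$); for a set of nodes, $vispre$ is the set of their visual prefixes. For a pattern $q$, $pset(q)$ is the set of nodes $v$ with $p(v)=q$. An SHT is well-formatted if (1) any two sibling nodes have equal visual patterns, and (2) for every visual pattern $q$, all nodes in $pset(q)$ have the same visual prefix (i.e., $vispre(pset(q))$ is a single sequence). Procedure \texttt{oracle\_gen}$(D)$: (i) Cluster the phrases of $S_D$ by identical visual pattern; (ii) prune clusters deemed non-header (via an LLM oracle); the remaining phrases are the header phrases. (iii) Tree construction, top-down, one cluster at a time: start with the cluster containing $s_1$ (which, if it contains only $s_1$, yields the root node for $s_1$). Repeatedly pick the not-yet-processed cluster containing the phrase of smallest index. For each phrase $s_i$ in this cluster create a node $v_i$, and choose as its parent the node $v_j$ of the current partially constructed tree (before this cluster is added, with text spans computed in that tree) such that $ind(v_i)\in ts(v_j)$ and there is no other node $v_k$ with $ind(v_k)>ind(v_j)$ and $ind(v_i)\in ts(v_k)$ (the most specific containing node). All nodes of the cluster are then added simultaneously, ordered by phrase index. The output is the resulting tree.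
   Formalization: A candidate SHT also has, as a defining condition rather than a consequence, preorder traversal in increasing phrase index, and $next(v)$ is $n+1$ instead of $n$ when no ancestor of $v$ has a right sibling, so $ts(v)$ reaches $s_n$. Each condition added here is assumed in the paper as well or is needed for the statement above to hold. This also corrects a misprint. *)

(* Defs.v *)
From mathcomp Require Import all_boot.
Set Implicit Arguments. Unset Strict Implicit. Unset Printing Implicit Defensive.

(* Conventions:
   - phrases are indexed 0 .. n-1 (s_1 of the paper is phrase 0);
     a document is represented by n and its visual-pattern function
     p : nat -> P (P any eqType of patterns).
   - a (partial) tree is a node list V : seq nat (phrase indices) together
     with a parent map par : nat -> option nat (None = no parent). *)

Section Trees.
Variable n : nat.
Variable V : seq nat.
Variable par : nat -> option nat.

Definition children (v : nat) : seq nat :=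
  sort leq [seq w <- V | par w == Some v].

Fixpoint preord (fuel v : nat) : seq nat :=
  v :: match fuel with
       | 0 => [::]
       | f.+1 => flatten [seq preord f w | w <- children v]
       end.

Fixpoint anc (fuel v : nat) : seq nat :=
  match fuel with
  | 0 => [::]
  | f.+1 => match par v with
            | Some u => rcons (anc f u) u
            | None => [::]
            end
  end.

Definition rsib (v : nat) : option nat :=
  match sort leq [seq w <- V | (par w == par v) && (v < w)] with
  | [::] => None
  | w :: _ => Some w
  end.

Fixpoint next_aux (fuel v : nat) : nat :=
  match rsib v with
  | Some w => w
  | None => match fuel with
            | 0 => n
            | f.+1 => match par v with
                      | Some u => next_aux f u
                      | None => n
                      end
            end
  end.

Definition next (v : nat) : nat := next_aux n v.

Definition in_ts (v i : nat) : bool := (v <= i) && (i < next v).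

Definition edge (u v : nat) : bool :=
  [&& u \in V, v \in V & par v == Some u].

Definition is_candidate_SHT (root : nat) : Prop :=
  [/\ uniq V, all (fun v => v < n) V, root \in V & par root = None] /\
  (forall v, v \in V -> v != root ->
     exists2 u, par v = Some u & (u \in V) && (u < v)) /\
  preord n root = sort leq V.

Variable P : eqType.
Variable p : nat -> P.

Definition vispre (v : nat) : seq P := map p (anc n v).

Definition well_formatted : Prop :=
  (forall u w, u \in V -> w \in V -> par u != None -> par u = par w ->
     p u = p w) /\
  (forall u w, u \in V -> w \in V -> p u = p w -> vispre u = vispre w).

(* most specific node of the current tree whose text span contains i *)
Definition choose_parent (i : nat) : option nat :=
  match [seq j <- V | in_ts j i] with
  | [::] => None
  | c => Some (foldr maxn 0 c)
  end.

End Trees.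

(* oracle_gen: keep is the (LLM) oracle deciding, per cluster (= per visual
   pattern), whether the cluster is retained as a header cluster. Clusters
   are processed in increasing order of their smallest phrase index. *)
Section OracleGen.
Variable P : eqType.
Variable n : nat.
Variable p : nat -> P.
Variable keep : P -> bool.

Definition cluster (i : nat) : seq nat := [seq j <- iota 0 n | p j == p i].

Definition gen_step (T : seq nat * (nat -> option nat)) (i : nat)
  : seq nat * (nat -> option nat) :=
  if keep (p i) && all (fun j => p j != p i) (iota 0 i) then
    let C := cluster i in
    (T.1 ++ C,
     fun x => if x \in C then choose_parent n T.1 T.2 x else T.2 x)
  else T.

Definition oracle_gen : seq nat * (nat -> option nat) :=
  foldl gen_step ([::], fun _ => None) (iota 0 n).

End OracleGen.

(* Main.v *)
Require Import Defs.
From mathcomp Require Import all_boot.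
Set Implicit Arguments. Unset Strict Implicit. Unset Printing Implicit Defensive.

Definition pit (par : nat -> option nat) (k x : nat) :=
  iter k (fun o : option nat => obind par o) (Some x).
Definition desc (par : nat -> option nat) (x y : nat) := exists k, pit par k x = Some y.

Lemma iter_None (par : nat -> option nat) k : iter k (fun o : option nat => obind par o) None = None.
Proof. by elim: k => //= k ->. Qed.

Lemma desc_refl par x : desc par x x.
Proof. by exists 0. Qed.

Lemma desc_par par x u y : par x = Some u -> desc par u y -> desc par x y.
Proof. move=> Hx [k Hk]; exists k.+1; by rewrite /pit iterSr /= Hx. Qed.

Lemma desc_comp par x y z : desc par x y -> desc par x z ->
  desc par y z \/ desc par z y.
Proof.
move=> [k1 H1] [k2 H2]; case: (leqP k1 k2) => Hk.
  left; exists (k2 - k1); move: H2.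
  have E : k2 = (k2 - k1) + k1 by rewrite subnK.
  by rewrite {1}E /pit iterD -/(pit par k1 x) H1.
  right; exists (k1 - k2); move: H1.
  have E : k1 = (k1 - k2) + k2 by rewrite subnK // ltnW.
  by rewrite {1}E /pit iterD -/(pit par k2 x) H2.
Qed.

Lemma desc_strict par x y : desc par x y -> x <> y ->
  exists c, par c = Some y /\ desc par x c.
Proof.
move=> [[|k] Hk] Hxy; first by move: Hk => [] /Hxy.
move: Hk; rewrite /pit iterS -/(pit par k x).
case E: (pit par k x) => [c|] //= Hc.
by exists c; split => //; exists k.
Qed.

Lemma desc_step par x y b : desc par x y -> x <> y -> par x = Some b ->
  desc par b y.
Proof.
move=> [[|k] Hk] Hxy Hb; first by move: Hk => [] /Hxy.
by exists k; move: Hk; rewrite /pit iterSr /= Hb.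
Qed.

Lemma desc_le (V : seq nat) par :
  (forall v, v \in V -> v != 0 -> exists2 u, par v = Some u & (u \in V) && (u < v)) ->
  par 0 = None ->
  forall v y, v \in V -> desc par v y -> (y \in V) /\ y <= v.
Proof.
move=> Hc H0 v y Hv [k]; elim: k v Hv => [|k IH] v Hv.
  by move=> [<-].
rewrite /pit iterSr /=.
case: (eqVneq v 0) => [->|Hv0]; first by rewrite H0 iter_None.
have [u Hu /andP[HuV Huv]] := Hc v Hv Hv0.
rewrite Hu => /(IH u HuV) [Hy Hyu]; split => //.
exact: leq_trans Hyu (ltnW Huv).
Qed.

Lemma desc_anti (V : seq nat) par :
  (forall v, v \in V -> v != 0 -> exists2 u, par v = Some u & (u \in V) && (u < v)) ->
  par 0 = None ->
  forall v y, v \in V -> desc par v y -> desc par y v -> v = y.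
Proof.
move=> Hc H0 v y Hv H1 H2.
have [Hy Hyv] := desc_le Hc H0 Hv H1.
have [_ Hvy] := desc_le Hc H0 Hy H2.
by apply/eqP; rewrite eqn_leq Hyv Hvy.
Qed.

Lemma desc_closed par (W : seq nat) :
  (forall y u, y \in W -> par y = Some u -> u \in W) ->
  forall y c, y \in W -> desc par y c -> c \in W.
Proof.
move=> Hcl y c Hy [k]; elim: k y Hy => [|k IH] y Hy; first by move=> [<-].
rewrite /pit iterSr /=; case E: (par y) => [u|]; last by rewrite iter_None.
by apply: IH; apply: Hcl E.
Qed.

Lemma sorted_sep (s1 s2 : seq nat) a b :
  sorted ltn (s1 ++ s2) -> a \in s1 -> b \in s2 -> a < b.
Proof.
elim: s1 => //= x s1 IH.
rewrite (path_sortedE ltn_trans) => /andP[Hall Hs].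
rewrite in_cons => /orP[/eqP ->|Ha] Hb; last exact: IH.
by move/allP: Hall; apply; rewrite mem_cat Hb orbT.
Qed.

Lemma foldr_max_le (s : seq nat) u :
  (forall y, y \in s -> y <= u) -> foldr maxn 0 s <= u.
Proof.
elim: s => //= x s IH Hle; rewrite geq_max Hle ?mem_head //.
by apply: IH => y Hy; apply: Hle; rewrite in_cons Hy orbT.
Qed.

Lemma foldr_max_ge (s : seq nat) u : u \in s -> u <= foldr maxn 0 s.
Proof.
elim: s => //= x s IH; rewrite in_cons => /orP[/eqP ->|Hu].
  exact: leq_maxl.
exact: leq_trans (IH Hu) (leq_maxr _ _).
Qed.

Lemma foldr_max (s : seq nat) u :
  u \in s -> (forall y, y \in s -> y <= u) -> foldr maxn 0 s = u.
Proof.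
move=> Hu Hle; apply/eqP; rewrite eqn_leq foldr_max_le //.
exact: foldr_max_ge.
Qed.

Lemma desc_trans par x y z : desc par x y -> desc par y z -> desc par x z.
Proof.
move=> [k1 H1] [k2 H2]; exists (k2 + k1).
by rewrite /pit iterD -/(pit par k1 x) H1.
Qed.

Lemma mem_children (V : seq nat) par v c :
  c \in children V par v -> (c \in V) /\ par c = Some v.
Proof. by rewrite /children mem_sort mem_filter => /andP[/eqP -> ->]. Qed.

Lemma pre_desc (V : seq nat) par f v x :
  x \in preord V par f v -> desc par x v.
Proof.
elim: f v x => [|f IH] v x /=.
  by rewrite in_cons in_nil orbF => /eqP ->; apply: desc_refl.
rewrite in_cons => /orP[/eqP ->|]; first exact: desc_refl.
move/flattenP => [s /mapP[c Hc ->] Hx].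
have [_ Hpc] := mem_children Hc.
exact: desc_trans (IH _ _ Hx) (desc_par Hpc (desc_refl _ _)).
Qed.

Lemma pre_block (V : seq nat) par :
  (forall v, v \in V -> v != 0 -> exists2 u, par v = Some u & (u \in V) && (u < v)) ->
  par 0 = None ->
  forall f v x y, v \in V -> x \in preord V par f v -> desc par x y -> desc par y v ->
  exists f' s1 s2, preord V par f v = s1 ++ preord V par f' y ++ s2 /\
                   x \in preord V par f' y.
Proof.
move=> Hc H0; elim=> [|f IH] v x y Hv Hx Hxy Hyv.
  move: Hx; rewrite /= in_cons in_nil orbF => /eqP Exv; subst x.
  have E := desc_anti Hc H0 Hv Hxy Hyv; subst y.
  by exists 0, [::], [::]; rewrite cats0 /= mem_head.
case: (eqVneq y v) => [Eyv|Hyv'].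
  by subst y; exists f.+1, [::], [::]; rewrite cats0.
move: Hx; rewrite /= in_cons => /orP[/eqP Exv|].
  subst x; by move: (desc_anti Hc H0 Hv Hxy Hyv) => E; rewrite E eqxx in Hyv'.
move/flattenP => [s /mapP[c Hc' ->] Hx].
have [HcV Hpc] := mem_children Hc'.
have Hyc : desc par y c.
  have Hxc := pre_desc Hx.
  case: (desc_comp Hxy Hxc) => // Hcy.
  case: (eqVneq c y) => [->|Hcy']; first exact: desc_refl.
  have Hvy := desc_step Hcy (elimN eqP Hcy') Hpc.
  by rewrite (desc_anti Hc H0 Hv Hvy Hyv) eqxx in Hyv'.
have [f' [s1 [s2 [E Hx']]]] := IH c x y HcV Hx Hxy Hyc.
exists f'.
case/splitPr: Hc' => cs1 cs2.
exists (v :: flatten [seq preord V par f w | w <- cs1] ++ s1),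
       (s2 ++ flatten [seq preord V par f w | w <- cs2]).
split => //.
by rewrite map_cat flatten_cat /= E -!catA.
Qed.

Lemma interval (n : nat) (V : seq nat) par :
  (forall v, v \in V -> v != 0 -> exists2 u, par v = Some u & (u \in V) && (u < v)) ->
  par 0 = None -> uniq V -> (0 \in V) ->
  preord V par n 0 = sort leq V ->
  forall v d j, v \in V -> d \in V -> j \in V -> desc par d v ->
    v <= j -> j <= d -> desc par j v.
Proof.
move=> Hc H0 Hu H0V Hpre v d j Hv Hd Hj Hdv Hvj Hjd.
have HdL : d \in preord V par n 0 by rewrite Hpre mem_sort.
have HjL : j \in preord V par n 0 by rewrite Hpre mem_sort.
have Hv0 : desc par v 0 by apply: (@pre_desc V par n); rewrite Hpre mem_sort.
have [f' [s1 [s2 [E Hd']]]] := pre_block Hc H0 H0V HdL Hdv Hv0.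
have Hsort : sorted ltn (preord V par n 0).
  by rewrite Hpre ltn_sorted_uniq_leq sort_uniq Hu (sort_sorted leq_total).
have HvB : v \in preord V par f' v by case: f' {E Hd'} => [|f'] /=; rewrite mem_head.
move: HjL; rewrite E !mem_cat => /orP[Hj1|/orP[HjB|Hj2]].
- have := sorted_sep (s1:=s1) (s2:=preord V par f' v ++ s2) (a:=j) (b:=v).
  rewrite -E => /(_ Hsort Hj1); rewrite mem_cat HvB => /(_ isT) Hlt.
  by move: Hvj; rewrite leqNgt Hlt.
- exact: pre_desc HjB.
- have := sorted_sep (s1:=s1 ++ preord V par f' v) (s2:=s2) (a:=d) (b:=j).
  rewrite -catA -E => /(_ Hsort); rewrite mem_cat Hd' orbT => /(_ isT Hj2) Hlt.
  by move: Hjd; rewrite leqNgt Hlt.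
Qed.

Lemma next_aux_spec (n : nat) (W : seq nat) (q par : nat -> option nat) :
  (forall y, y \in W -> q y = par y) ->
  (forall y u, y \in W -> par y = Some u -> u \in W) ->
  forall f v, v \in W ->
  next_aux n W q f v = n \/
  exists a w, [/\ next_aux n W q f v = w, desc par v a, w \in W, par w = par a & a < w].
Proof.
move=> Hq Hcl; elim=> [|f IH] v Hv /=.
- rewrite /rsib; case E: (sort _ _) => [|w l]; first by left.
  right; exists v, w; split => //; first exact: desc_refl.
  + have : w \in sort leq [seq w <- W | (q w == q v) && (v < w)] by rewrite E mem_head.
    by rewrite mem_sort mem_filter => /andP[_ ->].
  + have : w \in sort leq [seq w <- W | (q w == q v) && (v < w)] by rewrite E mem_head.
    rewrite mem_sort mem_filter => /andP[/andP[/eqP Hqw _] HW].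
    by rewrite -Hq // -Hq.
  + have : w \in sort leq [seq w <- W | (q w == q v) && (v < w)] by rewrite E mem_head.
    by rewrite mem_sort mem_filter => /andP[/andP[_ ->] _].
- rewrite /rsib; case E: (sort _ _) => [|w l].
  + rewrite Hq //; case Ep: (par v) => [u|]; last by left.
    have Hu := Hcl _ _ Hv Ep.
    case: (IH u Hu) => [->|[a [w [H0 H1 H2 H3 H4]]]]; first by left.
    right; exists a, w; split => //.
    exact: desc_par Ep H1.
  + right; exists v, w.
    have : w \in sort leq [seq w <- W | (q w == q v) && (v < w)] by rewrite E mem_head.
    rewrite mem_sort mem_filter => /andP[/andP[/eqP Hqw Hvw] HW].
    split => //; first exact: desc_refl.
    by rewrite -Hq // -Hq.
Qed.

Lemma choose_parent_ok (n : nat) (V : seq nat) par (W : seq nat) q x u :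
  (forall v, v \in V -> v != 0 -> exists2 u, par v = Some u & (u \in V) && (u < v)) ->
  par 0 = None ->
  (forall v, v \in V -> v < n) ->
  (forall v d j, v \in V -> d \in V -> j \in V -> desc par d v ->
    v <= j -> j <= d -> desc par j v) ->
  (forall y, y \in W -> y \in V) ->
  (forall y, y \in W -> q y = par y) ->
  (forall y u, y \in W -> par y = Some u -> u \in W) ->
  x \in V -> x \notin W -> par x = Some u -> u \in W -> u < x ->
  (forall c, c \in V -> par c = Some u -> c \notin W) ->
  choose_parent n W q x = Some u.
Proof.
move=> Hc H0 Hlt HI HW Hq Hcl Hx HxW Hpx HuW Hux Hsib.
have HuV := HW _ HuW.
have Hxu : desc par x u := desc_par Hpx (desc_refl _ _).
have Hts : in_ts n W q u x.
  rewrite /in_ts (ltnW Hux) /=.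
  rewrite /Defs.next.
  case: (next_aux_spec n Hq Hcl n HuW) => [->|[a [w [-> H1 H2 H3 H4]]]].
    exact: Hlt.
  have Hxa := desc_trans Hxu H1.
  have [HaV Hau] := desc_le Hc H0 HuV H1.
  have HwV := HW _ H2.
  rewrite ltnNge; apply/negP => Hwx.
  have Hwx' : w <> x by move=> E; subst w; rewrite H2 in HxW.
  have Hwa : desc par w a := HI a x w HaV Hx HwV Hxa (ltnW H4) Hwx.
  have Hwa' : w <> a by move=> E; subst w; rewrite ltnn in H4.
  case: (eqVneq a 0) => [Ea|Ha0].
    subst a; rewrite H0 in H3.
    have [b' Hb' _] := Hc w HwV (lt0n_neq0 H4).
    by rewrite H3 in Hb'.
  have [b Hb /andP[HbV Hba]] := Hc a HaV Ha0.
  rewrite Hb in H3.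
  have Hba' := desc_step Hwa Hwa' H3.
  have [_ Hab] := desc_le Hc H0 HbV Hba'.
  by move: (leq_ltn_trans Hab Hba); rewrite ltnn.
have Hmax : forall j, j \in [seq j <- W | in_ts n W q j x] -> j <= u.
  move=> j; rewrite mem_filter /in_ts => /andP[/andP[Hjx _] HjW].
  rewrite leqNgt; apply/negP => Huj.
  have HjV := HW _ HjW.
  have Hju := HI u x j HuV Hx HjV Hxu (ltnW Huj) Hjx.
  have Hju' : j <> u by move=> E; subst j; rewrite ltnn in Huj.
  have [c [Hpc Hjc]] := desc_strict Hju Hju'.
  have HcW := desc_closed Hcl HjW Hjc.
  have HcV := HW _ HcW.
  by move: (Hsib c HcV Hpc); rewrite HcW.
have Hin : u \in [seq j <- W | in_ts n W q j x] by rewrite mem_filter Hts HuW.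
rewrite /choose_parent.
move: Hmax Hin; case: [seq j <- W | in_ts n W q j x] => [|a l] // Hmax Hin.
by congr Some; apply: foldr_max.
Qed.

Lemma vis_par (P : eqType) (n : nat) (V : seq nat) par (p : nat -> P) y z u' :
  (forall u w, u \in V -> w \in V -> p u = p w -> vispre n par p u = vispre n par p w) ->
  0 < n -> y \in V -> z \in V -> p y = p z -> par y = Some u' ->
  exists2 u0, par z = Some u0 & p u0 = p u'.
Proof.
move=> WF2 Hn Hy Hz Hyz Hpy.
have := WF2 _ _ Hy Hz Hyz; rewrite /vispre.
case: n Hn {WF2} => // n _ /=; rewrite Hpy.
case: (par z) => [u0|]; last by rewrite map_rcons; case: (map _ _).
rewrite !map_rcons => /rcons_inj [_ E].
by exists u0.
Qed.

Unset Implicit Arguments.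

Theorem theorem1 (P : eqType) (n : nat) (p : nat -> P)
  (V : seq nat) (par : nat -> option nat) (keep : P -> bool) :
  is_candidate_SHT n V par 0 ->
  well_formatted n V par p ->
  (forall i, i < n -> keep (p i) = (i \in V)) ->
  (forall i, (i \in (oracle_gen n p keep).1) = (i \in V)) /\
  (forall u v, edge (oracle_gen n p keep).1 (oracle_gen n p keep).2 u v
               = edge V par u v).
Proof.
move=> [[Huniq Hall H0V H0] [Hc Hpre]] [WF1 WF2] Hkeep.
have Hlt : forall v, v \in V -> v < n by move=> v; move/allP: Hall => H /H.
have Hn : 0 < n by apply: Hlt H0V.
have HI := interval Hc H0 Huniq H0V Hpre.
have HkV : forall x y, x < n -> y \in V -> p x = p y -> x \in V.
  by move=> x y Hx Hy Exy; rewrite -Hkeep // Exy Hkeep // Hlt.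
pose G i := foldl (gen_step n p keep) ([::], fun _ => None) (iota 0 i).
have Inv : forall i, i <= n ->
  (forall x, (x \in (G i).1) = (x \in V) && has (fun j => p j == p x) (iota 0 i)) /\
  (forall x, x \in (G i).1 -> (G i).2 x = par x).
  elim=> [|i IH] Hi; first by split=> x; rewrite /G /= ?andbF ?in_nil.
  have [IH1 IH2] := IH (ltnW Hi).
  have Hin : i < n by [].
  have HGi : G i.+1 = gen_step n p keep (G i) i.
    by rewrite /G -addn1 iotaD foldl_cat add0n.
  have Hhas : forall x, has (fun j => p j == p x) (iota 0 i.+1) =
                        has (fun j => p j == p x) (iota 0 i) || (p i == p x).
    by move=> x; rewrite -addn1 iotaD has_cat add0n /= orbF.
  rewrite HGi /gen_step.
  case: ifP => [/andP[Hk Hfirst] | Hno].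
  - have HiV : i \in V by rewrite -Hkeep.
    have Hcl : forall x, (x \in cluster n p i) = (x < n) && (p x == p i).
      by move=> x; rewrite /cluster mem_filter mem_iota add0n andbC.
    have Hdisj : forall x, x \in (G i).1 -> x \notin cluster n p i.
      move=> x; rewrite IH1 Hcl => /andP[_ /hasP[j Hj /eqP Ej]].
      apply/negP => /andP[_ /eqP Exi].
      by move/allP: Hfirst => /(_ j Hj); rewrite Ej Exi eqxx.
    split.
      move=> x; rewrite mem_cat IH1 Hcl Hhas.
      case HxV: (x \in V) => /=.
        by rewrite (Hlt _ HxV) /= eq_sym.
      apply/negbTE/negP => /andP[Hx /eqP Exi].
      by rewrite (HkV x i Hx HiV Exi) in HxV.
    move=> x; rewrite mem_cat /=.
    case HxC: (x \in cluster n p i); last by rewrite orbF => /IH2.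
    move=> _; move: HxC; rewrite Hcl => /andP[Hx /eqP Exi].
    have HxV := HkV x i Hx HiV Exi.
    have HxW : x \notin (G i).1.
      by apply/negP => /Hdisj; rewrite Hcl Hx Exi eqxx.
    have Hparlt : forall y u, y \in V -> par y = Some u -> (u \in V) /\ u < y.
      move=> y u Hy Hpy; case: (eqVneq y 0) => [Ey|Hy0].
        by subst y; rewrite H0 in Hpy.
      have [u'' Hp'' /andP[H1 H2]] := Hc y Hy Hy0.
      by move: Hpy; rewrite Hp'' => -[<-].
    case: (eqVneq x 0) => [Ex0|Hx0].
      subst x.
      have Ei : i = 0.
        apply/eqP; rewrite -leqn0 leqNgt; apply/negP => Hi0.
        move/allP: Hfirst => /(_ 0); rewrite mem_iota Hi0 Exi eqxx.
        by move=> /(_ isT).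
      by subst i; rewrite H0 /G.
    have [u Hpx /andP[HuV Hux]] := Hc x HxV Hx0.
    rewrite Hpx.
    apply: (choose_parent_ok Hc H0 Hlt HI) => //.
    - by move=> y; rewrite IH1 => /andP[].
    - move=> y u' Hy Hpy; have := Hy; rewrite IH1 => /andP[HyV /hasP[j0 Hj0 /eqP Ej0]].
      move: (Hj0); rewrite mem_iota add0n => /andP[_ Hj0i].
      have Hj0V : j0 \in V := HkV j0 y (ltn_trans Hj0i Hin) HyV Ej0.
      have [u0 Hpj0 Eu0] := vis_par WF2 Hn HyV Hj0V (esym Ej0) Hpy.
      have [Hu'V _] := Hparlt _ _ HyV Hpy.
      have [_ Hu0] := Hparlt _ _ Hj0V Hpj0.
      rewrite IH1 Hu'V /=; apply/hasP; exists u0; last by rewrite Eu0.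
      by rewrite mem_iota add0n (ltn_trans Hu0 Hj0i).
    - have [u0 Hpi Eu0] := vis_par WF2 Hn HxV HiV Exi Hpx.
      have [_ Hu0] := Hparlt _ _ HiV Hpi.
      rewrite IH1 HuV /=; apply/hasP; exists u0; last by rewrite Eu0.
      by rewrite mem_iota add0n Hu0.
    - move=> c HcV Hpc.
      have Epc : p c = p x by apply: WF1 => //; rewrite ?Hpc ?Hpx.
      by apply/negP => /Hdisj; rewrite Hcl (Hlt c HcV) Epc Exi eqxx.
  - split; last exact: IH2.
    move=> x; rewrite IH1 Hhas.
    case HxV: (x \in V) => //=.
    case Hh: (has _ _) => //=.
    apply/esym/negbTE/negP => /eqP Epx.
    move: Hno; rewrite Epx (Hkeep _ (Hlt _ HxV)) HxV /=.
    move/negbT/allPn => [j Hj /negPn /eqP Ej].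
    move/negbT/hasPn: Hh => /(_ j Hj); by rewrite Ej eqxx.
have [M1 M2] := Inv n (leqnn n).
have Mem : forall x, (x \in (G n).1) = (x \in V).
  move=> x; rewrite M1; case HxV: (x \in V) => //=.
  by apply/hasP; exists x; rewrite ?mem_iota ?add0n ?Hlt.
split; first exact: Mem.
move=> u v; rewrite /edge -/(G n) !Mem.
case Hv: (v \in V); last by rewrite !andbF.
by rewrite M2 ?Mem.
Qed.
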